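(* Let $G$ be a near triangulation with outer cycle $C$ and $|V(G)|\le 6$, and let $x,y\in V(C)$ be distinct. Then $G$ contains a Hamiltonian path with ends $x$ and $y$, or one of the following holds: (i) $xy$ is a chord of $C$; (ii) $G$ has a path $xzy$ such that both $xz$ and $zy$ are chords of $C$, and $G-\{x,y,z\}$ consists of $3$ isolated vertices (so $G$ is either the graph with outer cycle $u_1u_2\cdots u_6u_1$ and chords $u_1u_3,u_1u_4,u_1u_5$ with $\{x,y\}=\{u_3,u_5\}$, or the graph with outer cycle $w_1w_2w_3w_4w_5w_1$, an interior vertex $w_6$, and chords $w_2w_4,w_2w_5$ and edges $w_2w_6,w_4w_6,w_5w_6$, with $\{x,y\}=\{w_4,w_5\}$); (iii) $G$ is the graph with outer cycle $u_1u_2\cdots u_6u_1$ and chords $u_1u_3,u_3u_5,u_5u_1$, and $\{x,y\}=\{u_1,u_4\}$ up to the symmetries of this graph (that is, one of $x,y$ has degree $4$ and the other is the degree-$2$ vertex not adjacent to it).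
   Context: A near triangulation is a plane graph in which every face is bounded by a triangle except possibly the outer face, which is bounded by the outer cycle $C$; any plane embedding of $K_2$ also counts as a near triangulation with itself as its outer cycle. A chord of $C$ is an edge of $G$ not in $C$ with both ends on $C$. *)

(* Defs.v *)
(* Plane graphs are encoded combinatorially by rotation
   systems (Heffter--Edmonds): a simple graph [adj] on a finite vertex type
   [T], together with, for each vertex v, a cyclic ordering [rot v] of its
   neighbours.  Faces are the orbits of the face permutation [phi] on darts;
   the embedding is plane (genus 0) iff the graph is connected and Euler's
   formula V - E + F = 2 holds. *)
From mathcomp Require Import all_boot fingroup perm.
Set Implicit Arguments. Unset Strict Implicit. Unset Printing Implicit Defensive.

Section PlaneGraphs.
Variable T : finType.
Variable adj : rel T.
Variable rot : T -> {perm T}.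

Definition simple_graph : Prop :=
  (forall u v, adj u v = adj v u) /\ (forall u, ~~ adj u u).

Definition darts : {set T * T} := [set d : T * T | adj d.1 d.2].

Definition rotation_system : Prop :=
  (forall v u, adj v u -> adj v (rot v u)) /\
  (forall v u w, adj v u -> adj v w -> fconnect (rot v) u w).

Definition phi (d : T * T) : T * T := (d.2, rot d.2 d.1).

Definition face (d : T * T) : {set T * T} := [set e | fconnect phi d e].

Definition nfaces : nat := #|[set face d | d in darts]|.

Definition connected_graph : Prop := forall u v, connect adj u v.

(* plane embedding: connected and Euler's formula 2V + 2F = 2E + 4 (#darts = 2E) *)
Definition plane_graph : Prop :=
  [/\ simple_graph, rotation_system, connected_graph &
      2 * #|T| + 2 * nfaces = #|darts| + 4].

(* Outer face = face of the dart d0. *)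
Variable d0 : T * T.

Definition outer_verts : {set T} := [set d.1 | d in face d0].
Definition outer_edge (u v : T) : bool :=
  ((u, v) \in face d0) || ((v, u) \in face d0).

(* near triangulation with outer cycle C bounding the face of d0: all other
   faces have length 3 (i.e. are bounded by triangles, the graph being simple),
   and the boundary walk of the outer face visits pairwise distinct vertices,
   i.e. it is a cycle (or K2, when it has length 2). *)
Definition near_triangulation : Prop :=
  [/\ plane_graph, d0 \in darts,
      {in face d0 &, injective (fun d : T * T => d.1)} &
      forall e, e \in darts -> e \notin face d0 -> #|face e| = 3].

Definition chord (u v : T) : bool :=
  [&& adj u v, ~~ outer_edge u v, u \in outer_verts & v \in outer_verts].

End PlaneGraphs.

Definition ham_path (T : finType) (adj : rel T) (x y : T) : Prop :=
  exists p : seq T,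
    [/\ path adj x p, last x p = y, uniq (x :: p) & size (x :: p) = #|T|].

(* the hexagon u_1 ... u_6 (indices 0..5) *)
Definition hex_cyc (i j : 'I_6) : bool :=
  (val j == (val i).+1 %% 6) || (val i == (val j).+1 %% 6).
(* hexagon plus chords u1u3, u3u5, u5u1 (indices 0,2,4) *)
Definition hex_tri_adj (i j : 'I_6) : bool :=
  hex_cyc i j || [&& i != j, ~~ odd i & ~~ odd j].

(* Main.v *)
Require Import Defs.
From mathcomp Require Import all_boot fingroup perm zify.
Set Implicit Arguments. Unset Strict Implicit. Unset Printing Implicit Defensive.

Fixpoint allL (A : Type) (f : A -> bool) (s : seq A) : bool :=
  match s with [::] => true | x :: s' => if f x then allL f s' else false end.
Fixpoint hasL (A : Type) (f : A -> bool) (s : seq A) : bool :=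
  match s with [::] => false | x :: s' => if f x then true else hasL f s' end.
Lemma allLE A f (s : seq A) : allL f s = all f s.
Proof. by elim: s => //= a s ->; case: (f a). Qed.
Lemma hasLE A f (s : seq A) : hasL f s = has f s.
Proof. by elim: s => //= a s ->; case: (f a). Qed.

Fixpoint pow (A : Type) (s : seq A) : seq (seq A) :=
  match s with [::] => [:: [::]] | a :: s' => let P := pow s' in map (cons a) P ++ P end.

Definition pairs n : seq (nat * nat) :=
  [seq p <- [seq (i, j) | i <- iota 0 n, j <- iota 0 n] | p.1 < p.2].

Section Chks.
Variables (n k : nat) (E : seq (nat * nat)).
Definition adjE i j := ((i, j) \in E) || ((j, i) \in E).
Definition cN := iota 0 k.
Definition vs := iota 0 n.
Definition outerN a b := ((a < k) && (b == next cN a)) || ((b < k) && (a == next cN b)).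
Definition chordN a b := [&& adjE a b, ~~ outerN a b, a < k & b < k].
Definition nbrs v := [seq u <- vs | adjE v u].
Definition linkN v :=
  if v < k then
    hasL (fun s => [&& head 0 s == next cN v, last 0 s == prev cN v & path adjE (head 0 s) (behead s)])
        (permutations (nbrs v))
  else hasL (path.cycle adjE) (permutations (nbrs v)).
Definition closedN (S : seq nat) := allL (fun i => allL (fun j => adjE i j ==> (j \in S)) vs) S.
Definition condN :=
  if allL (fun i => adjE i (next cN i)) cN then
    if allL linkN vs then
      allL (fun S => if 0 \in S then if closedN S then allL (mem S) vs else true else true) (pow vs)
    else false else false.
Definition iiN x y :=
  hasL (fun z => [&& adjE x z, adjE z y, chordN x z, chordN z y, n == 6 &
        allL (fun a => allL (fun b => (a \notin [:: x; y; z]) ==> (b \notin [:: x; y; z]) ==> ~~ adjE a b) vs) vs]) vs.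
Definition hcN (i j : nat) : bool := (j == i.+1 %% 6) || (i == j.+1 %% 6).
Definition htN (i j : nat) : bool := hcN i j || [&& i != j, ~~ odd i & ~~ odd j].
Definition hexok (u : seq nat) := allL (fun i => allL (fun j =>
        (adjE (nth 0 u i) (nth 0 u j) == htN i j) &&
        (outerN (nth 0 u i) (nth 0 u j) == hcN i j)) (iota 0 6)) (iota 0 6).
Definition iiiN (P : seq (seq nat)) x y :=
  if n == 6 then hasL (fun u => if ((x == nth 0 u 0) && (y == nth 0 u 3)) || ((x == nth 0 u 3) && (y == nth 0 u 0))
                     then hexok u else false) P
  else false.
Definition hamok (s : seq nat) := path adjE (head 0 s) (behead s).
Definition conclN :=
  let P := permutations vs in
  let HP := [seq s <- P | hamok s] in
  allL (fun x => allL (fun y => if x != y then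
      if hasL (fun s => (head 0 s == x) && (last 0 s == y)) HP then true else
      if chordN x y then true else if iiN x y then true else iiiN P x y else true) cN) cN.
End Chks.

Definition checkNK n k := allL (fun E => if condN n k E then conclN n k E else true) (pow (pairs n)).
Definition checkAll := allL (fun n => allL (fun k => checkNK n k) (iota 2 n.-1)) (iota 2 5).

Lemma checkAllT : checkAll = true.
Proof. vm_compute. reflexivity. Qed.

Lemma check_nk n k : 2 <= k <= n -> n <= 6 -> checkNK n k.
Proof.
move=> /andP[k2 kn] n6; have := checkAllT; rewrite /checkAll allLE => /allP/(_ n).
rewrite mem_iota allLE => /(_ _)/allP/(_ k); apply.
  by rewrite (leq_trans k2 kn) /=; lia.
by rewrite mem_iota k2 /=; lia.
Qed.

Lemma pow_filter (A : eqType) (p : pred A) (s : seq A) : filter p s \in pow s.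
Proof.
elim: s => [|a s IH] //=.
by case: (p a); rewrite mem_cat ?map_f ?IH ?orbT.
Qed.

Lemma mem_pairs n i j : ((i, j) \in pairs n) = (i < j) && (j < n).
Proof.
rewrite mem_filter /=; case: ltnP => //= ij; apply/allpairsP/idP.
  by case=> [[a b]] /= [_]; rewrite mem_iota add0n => /andP[_ bn] [_ ->].
by move=> jn; exists (i, j); rewrite !mem_iota /= jn (ltn_trans ij jn).
Qed.

Definition outerC (T : eqType) (c : seq T) (u v : T) :=
  ((u \in c) && (v == next c u)) || ((v \in c) && (u == next c v)).
Definition chordG (T : finType) (adj : rel T) (oe : T -> T -> bool) (ov : {set T}) (u v : T) :=
  [&& adj u v, ~~ oe u v, u \in ov & v \in ov].

Section Transport.
Variables (T : finType) (adj : rel T) (c : seq T) (x y : T).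
Hypothesis adj_sym : forall u v, adj u v = adj v u.
Hypothesis adj_irr : forall u, ~~ adj u u.
Hypothesis conn : forall u v, connect adj u v.
Hypothesis uc : uniq c.
Hypothesis c2 : 2 <= size c.
Hypothesis T6 : #|T| <= 6.
Hypothesis cyc_edge : forall u, u \in c -> adj u (next c u).
Hypothesis link_b : forall v, v \in c -> exists s, [/\ uniq s, s =i adj v, s != [::] &
   [/\ head v s = next c v, last v s = prev c v & path adj (head v s) (behead s)]].
Hypothesis link_i : forall v, v \notin c -> exists s, [/\ uniq s, s =i adj v & path.cycle adj s].
Hypothesis xc : x \in c.
Hypothesis yc : y \in c.
Hypothesis xy : x != y.

Let n := #|T|.
Let k := size c.
Let L := c ++ [seq t <- enum T | t \notin c].
Let g t := index t L.
Let f i := nth x L i.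

Lemma memL t : t \in L.
Proof. by rewrite mem_cat mem_filter mem_enum andbT; case: (t \in c). Qed.
Lemma uniqL : uniq L.
Proof.
rewrite cat_uniq uc filter_uniq ?enum_uniq // andbT.
by apply/hasPn => t; rewrite mem_filter => /andP[].
Qed.
Lemma sizeL : size L = n.
Proof.
rewrite /n cardE; apply: perm_size; apply: uniq_perm; rewrite ?uniqL ?enum_uniq //.
by move=> t; rewrite memL mem_enum.
Qed.
Lemma fg t : f (g t) = t.
Proof. exact: nth_index (memL t). Qed.
Lemma gf i : i < n -> g (f i) = i.
Proof. by move=> lt; rewrite /g /f index_uniq ?sizeL ?uniqL. Qed.
Lemma g_lt t : g t < n.
Proof. by rewrite /g -sizeL index_mem memL. Qed.
Lemma g_inj : injective g.
Proof. exact: can_inj fg. Qed.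
Lemma f_inj i j : i < n -> j < n -> f i = f j -> i = j.
Proof. by move=> ??  e; rewrite -(gf (i:=i)) // e gf. Qed.
Lemma g_in_c t : (g t < k) = (t \in c).
Proof.
rewrite /g /L index_cat; case: ifP => tc; first by rewrite index_mem.
by rewrite ltnNge leq_addr.
Qed.
Lemma gc : map g c = iota 0 k.
Proof.
rewrite -{1}(mkseq_nth x c) /mkseq -map_comp; apply: map_id_in => i.
rewrite mem_iota add0n /= => ik.
have -> : nth x c i = f i by rewrite /f /L nth_cat ik.
by rewrite gf // (leq_trans ik) // -sizeL size_cat leq_addr.
Qed.
Lemma next_g u : next (cN k) (g u) = g (next c u).
Proof. by rewrite /cN -gc next_map //; apply: g_inj. Qed.
Lemma prev_g u : prev (cN k) (g u) = g (prev c u).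
Proof. by rewrite /cN -gc prev_map //; apply: g_inj. Qed.
Lemma kn : k <= n.
Proof. by rewrite -sizeL size_cat leq_addr. Qed.

Let E := [seq p <- pairs n | adj (f p.1) (f p.2)].

Lemma adjE_f i j : i < n -> j < n -> adjE E i j = adj (f i) (f j).
Proof.
have mE p : (p \in E) = adj (f p.1) (f p.2) && (p \in pairs n) by rewrite /E mem_filter.
move=> il jl; rewrite /adjE !mE !mem_pairs il jl !andbT /=.
case: (ltngtP i j) => [ij|ji|->] /=; rewrite ?andbT ?andbF ?orbF ?orFb //.
by rewrite (negbTE (adj_irr _)).
Qed.
Lemma adjE_g u v : adjE E (g u) (g v) = adj u v.
Proof. by rewrite adjE_f ?g_lt // !fg. Qed.
Lemma outerN_g u v : outerN k (g u) (g v) = outerC c u v.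
Proof. by rewrite /outerN /outerC !g_in_c !next_g !(inj_eq g_inj). Qed.
Lemma chordN_g u v : chordN k E (g u) (g v) = [&& adj u v, ~~ outerC c u v, u \in c & v \in c].
Proof. by rewrite /chordN adjE_g outerN_g !g_in_c. Qed.

Lemma condE : condN n k E.
Proof.
rewrite /condN !allLE.
have -> : all (fun i => adjE E i (next (cN k) i)) (cN k).
  apply/allP => i; rewrite {1}/cN -gc => /mapP[u uc' ->].
  by rewrite next_g adjE_g cyc_edge.
have -> : all (linkN n k E) (vs n).
  apply/allP => i; rewrite mem_iota add0n /= => il.
  rewrite -(gf il); set v := f i; rewrite /linkN !hasLE g_in_c.
  have permE s : uniq s -> s =i adj v -> perm_eq (map g s) (nbrs n E (g v)).
    move=> us ms; apply: uniq_perm; first by rewrite (map_inj_uniq g_inj).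
      by rewrite filter_uniq // iota_uniq.
    move=> j; rewrite mem_filter mem_iota add0n /=; apply/mapP/andP.
      by case=> t; rewrite ms => vt ->; rewrite adjE_g g_lt; split.
    case=> aj jl; exists (f j); last by rewrite gf.
    rewrite ms; change (adj v (f j)); rewrite -{1}(fg v) -adjE_f ?g_lt //.
  case: ifP => vc.
    have [s [us ms s0 [hs ls ps]]] := link_b vc.
    apply/hasP; exists (map g s); first by rewrite mem_permutations permE.
    case: s s0 us ms hs ls ps => [|a s] // _ us ms /= ha ls ps.
    rewrite next_g prev_g -ha last_map ls !eqxx /= path_map.
    by rewrite (eq_path (e' := adj)) // => p q /=; rewrite adjE_g.
  have [s [us ms cs]] := link_i (negbT vc).
  apply/hasP; exists (map g s); first by rewrite mem_permutations permE.
  by rewrite cycle_map (eq_cycle (e' := adj)) // => p q /=; rewrite adjE_g.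
rewrite /=; apply/allP => S _.
case: ifP => // S0; case: ifP => //; rewrite /closedN allLE => clS; rewrite allLE.
apply/allP => j; rewrite mem_iota add0n /= => jl.
have n0 : 0 < n by apply: leq_trans kn; apply: leq_trans c2.
have : connect adj (f 0) (f j) by [].
case/connectP => p pth lst.
suff : g (last (f 0) p) \in S by rewrite -lst gf.
have : g (f 0) \in S by rewrite gf.
elim: p (f 0) pth {lst} => [|b p IH] a //=.
case/andP=> ab pth ga; apply: IH pth _.
move/allP: clS => /(_ _ ga).
rewrite allLE => /allP /(_ (g b)); rewrite mem_iota add0n g_lt adjE_g ab /=.
by move=> /(_ isT).
Qed.


Lemma htN_hex (i j : 'I_6) : htN i j = hex_tri_adj i j.
Proof. by []. Qed.
Lemma hcN_hex (i j : 'I_6) : hcN i j = hex_cyc i j.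
Proof. by []. Qed.

Lemma concl_T (oe : T -> T -> bool) (ov : {set T}) :
  oe =2 outerC c -> ov =i c ->
  ham_path adj x y \/ chordG adj oe ov x y \/
  (exists z, [/\ adj x z /\ adj z y, chordG adj oe ov x z, chordG adj oe ov z y, #|T| = 6 &
     forall a b, a \notin [:: x; y; z] -> b \notin [:: x; y; z] -> ~~ adj a b]) \/
  (exists u : 'I_6 -> T, [/\ injective u, forall i j, adj (u i) (u j) = hex_tri_adj i j,
     forall i j, oe (u i) (u j) = hex_cyc i j &
     (x, y) = (u ord0, u (inord 3)) \/ (x, y) = (u (inord 3), u ord0)]).
Proof.
move=> oeE ovE.
have chordE u v : chordG adj oe ov u v = chordN k E (g u) (g v).
  by rewrite chordN_g /chordG oeE !ovE.
have n2 : 2 <= n by apply: leq_trans kn.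
have := @check_nk n k (ltac:(by rewrite c2 kn)) T6.
rewrite /checkNK allLE => /allP /(_ E (pow_filter _ _)); rewrite condE.
rewrite /conclN; cbv zeta; rewrite allLE => /allP.
have gin u : u \in c -> g u \in cN k by move=> uc'; rewrite /cN -gc map_f.
move=> /(_ _ (gin _ xc)); rewrite allLE => /allP /(_ _ (gin _ yc)).
rewrite (inj_eq g_inj) xy.
have memn (s : seq nat) i : perm_eq s (vs n) -> i \in s -> i < n.
  by move=> ps; rewrite (perm_mem ps) mem_iota.
case: ifP => [hamH _ | _].
  left; move: hamH; rewrite hasLE => /hasP[s]; rewrite mem_filter => /andP[hs].
  rewrite mem_permutations => sp /andP[/eqP hd /eqP lt].
  have ss : size s = n by rewrite (perm_size sp) size_iota.
  have us : uniq s by rewrite (perm_uniq sp) iota_uniq.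
  case: s hs sp ss us hd lt => [|a t] //=; first by move=> _ _ ss; rewrite -ss in n2.
  move=> hs sp ss us ha lt; exists (map f t).
  have xa : x = f a by rewrite ha fg.
  have allP' : all (fun i => i < n) (a :: t) by apply/allP => i; apply: memn sp.
  split.
  - rewrite xa path_map -(eq_in_path (P := fun i => i < n) (e := adjE E)) //.
    by move=> i j il jl; rewrite /= adjE_f.
  - by rewrite xa last_map lt fg.
  - rewrite xa -map_cons map_inj_in_uniq // => i j il jl; apply: f_inj; exact: memn sp _.
  - by rewrite /= size_map ss.
case: ifP => [chH _ | _]; first by right; left; rewrite chordE.
case: ifP => [iiH _ | _ iiiH].
  right; right; left; move: iiH; rewrite /iiN hasLE => /hasP[z].
  rewrite mem_iota add0n /= => zl; rewrite -(gf zl); set w := f z.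
  rewrite !adjE_g -!chordE => /and5P[xw wy cxw cwy /andP[/eqP n6]].
  rewrite !allLE => H; exists w; split => // a b an bn.
  move/allP: H => /(_ (g a)); rewrite mem_iota g_lt => /(_ isT); rewrite allLE.
  move/allP => /(_ (g b)); rewrite mem_iota g_lt => /(_ isT).
  have -> : [:: g x; g y; g w] = map g [:: x; y; w] by [].
  by rewrite !(mem_map g_inj) an bn adjE_g.
right; right; right; move: iiiH; rewrite /iiiN; case: eqP => // n6.
rewrite hasLE => /hasP[u]; rewrite mem_permutations => up.
case: ifP => // xyu hx.
have su : size u = 6 by rewrite (perm_size up) size_iota.
have uu : uniq u by rewrite (perm_uniq up) iota_uniq.
have ul (i : 'I_6) : nth 0 u i < n by apply: memn up _; rewrite mem_nth // su.
move: hx; rewrite /hexok allLE => /allP hx.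
have hx' (i j : 'I_6) : (adjE E (nth 0 u i) (nth 0 u j) == htN i j) &&
        (outerN k (nth 0 u i) (nth 0 u j) == hcN i j).
  have io (m : 'I_6) : nat_of_ord m \in iota 0 6 by rewrite mem_iota ltn_ord.
  by move: (hx i (io i)); rewrite allLE => /allP /(_ j (io j)).
exists (fun i => f (nth 0 u i)); split.
- move=> i j /f_inj => /(_ (ul i) (ul j)) /eqP; rewrite nth_uniq ?su // => /eqP.
  exact: val_inj.
- by move=> i j; rewrite -adjE_f // -htN_hex; case/andP: (hx' i j) => /eqP.
- move=> i j; rewrite oeE -outerN_g !gf // -hcN_hex.
  by case/andP: (hx' i j) => _ /eqP.
- have i3 : nat_of_ord (inord 3 : 'I_6) = 3 by rewrite inordK.
  rewrite i3; case/orP: xyu => /andP[/eqP ex /eqP ey]; [left|right];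
  by rewrite -ex -ey !fg.
Qed.

End Transport.

Section Rot.
Variables (T : finType) (adj : rel T) (rot : T -> {perm T}) (d0 : T * T).
Hypothesis NT : near_triangulation adj rot d0.

Let F := phi rot.
Let o := orbit F d0.
Let c := map fst o.

Lemma adj_sym : forall u v, adj u v = adj v u.
Proof. by case: NT => [[[]]]. Qed.
Lemma adj_irr : forall u, ~~ adj u u.
Proof. by case: NT => [[[]]]. Qed.
Lemma rs1 : forall v u, adj v u -> adj v (rot v u).
Proof. by case: NT => [[_ []]]. Qed.
Lemma rs2 : forall v u w, adj v u -> adj v w -> fconnect (rot v) u w.
Proof. by case: NT => [[_ []]]. Qed.
Lemma conn : forall u v, connect adj u v.
Proof. by case: NT => [[]]. Qed.

Lemma F_inj : injective F.
Proof.
move=> [a b] [a' b']; rewrite /F /phi /= => [[eb]]; rewrite -eb => /perm_inj ->.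
by rewrite eb.
Qed.

Lemma in_darts d : (d \in darts adj) = adj d.1 d.2.
Proof. by rewrite inE. Qed.

Lemma F_dart d : d \in darts adj -> F d \in darts adj.
Proof. by rewrite !in_darts /= => h; apply: rs1; rewrite adj_sym. Qed.

Lemma in_face e d : (d \in face rot e) = (d \in orbit F e).
Proof. by rewrite inE fconnect_orbit. Qed.

Lemma orbit_darts e d : e \in darts adj -> d \in orbit F e -> d \in darts adj.
Proof.
move=> ed; rewrite /orbit => /trajectP[i _ ->].
by elim: i => //= i IH; apply: F_dart.
Qed.

Lemma d0_dart : d0 \in darts adj.
Proof. by case: NT. Qed.

Lemma o_dart d : d \in o -> adj d.1 d.2.
Proof. by move=> h; rewrite -in_darts; apply: orbit_darts d0_dart h. Qed.

Lemma fst_inj : {in o &, injective fst}.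
Proof.
case: NT => _ _ h _ a b ao bo; apply: h; by rewrite in_face.
Qed.

Lemma uc : uniq c.
Proof. by rewrite map_inj_in_uniq ?orbit_uniq //; apply: fst_inj. Qed.

Lemma F_next d : d \in o -> next c d.1 = d.2.
Proof.
move=> dO.
pose R (a b : T) := has (fun e => (e.1 == a) && (e.2 == b)) o.
have cR : path.cycle R c.
  rewrite /c cycle_map; apply: (sub_in_cycle (P := mem o) (e := frel F)); last first.
    exact: (cycle_orbit F_inj d0).
    by apply/allP.
  move=> a b ao bo /eqP <-; apply/hasP; exists a => //=.
  by rewrite eqxx /F /phi /= eqxx.
have := next_cycle cR (map_f fst dO); case/hasP => e eo /andP[/eqP e1 /eqP <-].
by rewrite (fst_inj eo dO e1).
Qed.

Lemma in_o u v : ((u, v) \in o) = (u \in c) && (v == next c u).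
Proof.
apply/idP/andP => [h|[/mapP[d dO ->] /eqP ->]].
  by split; [apply: (map_f fst h) | rewrite (F_next h)].
by rewrite (F_next dO) -surjective_pairing.
Qed.

Lemma outer_edgeE u v : outer_edge rot d0 u v = outerC c u v.
Proof. by rewrite /outer_edge !in_face -/F -/o !in_o. Qed.

Lemma outer_vertsE u : (u \in outer_verts rot d0) = (u \in c).
Proof.
apply/imsetP/mapP => [[d]|[d]]; rewrite ?inE ?in_face -/F -/o => dO ->; exists d => //.
  by rewrite -fconnect_orbit.
by rewrite in_face.
Qed.

Lemma cyc_edge u : u \in c -> adj u (next c u).
Proof. by move=> uc'; apply: (o_dart (d := (u, next c u))); rewrite in_o uc' eqxx. Qed.

Lemma c2 : 2 <= size c.
Proof.
have d0o : d0 \in o by apply: in_orbit.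
have d1o : F d0 \in o by apply: mem_orbit.
have := uniq_leq_size (s1 := [:: d0.1; d0.2]) (s2 := c).
apply => /=.
  by rewrite inE andbT; apply: contraNneq (adj_irr d0.1) => e; rewrite {2}e (o_dart d0o).
move=> t; rewrite !inE => /orP[]/eqP ->; first exact: map_f.
exact: (map_f fst d1o).
Qed.

Lemma TL e : adj e.1 e.2 -> e \notin o -> adj e.1 (rot e.2 e.1).
Proof.
move=> ed eno; case: NT => _ _ _ /(_ e); rewrite in_darts ed in_face -/F => /(_ isT).
have -> : (e \in orbit F d0) = false by apply: negbTE.
move=> /(_ isT) card3.
have ord3 : fingraph.order F e = 3.
  by rewrite -card3 /face /fingraph.order -cardsE.
have := iter_order F_inj e; rewrite ord3.
case: e ed {eno card3 ord3} => a v /= av.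
set w := rot v a; set z := rot w v.
rewrite /F /phi /= -/w -/z => [[za _]].
have vw : adj v w by apply: rs1; rewrite adj_sym.
have wz : adj w z by apply: rs1; rewrite adj_sym.
by rewrite adj_sym -za.
Qed.

Lemma conn_rot v a b : fconnect (rot v) a b -> adj v a -> adj v b.
Proof.
case/connectP => p pth ->; elim: p a pth => //= q p IH a /andP[/eqP <- pth] va.
by apply: IH pth (rs1 va).
Qed.

Lemma orbit_nbrs v a : adj v a -> orbit (rot v) a =i adj v.
Proof.
move=> va b; rewrite -fconnect_orbit; apply/idP/idP => [h|h].
  exact: conn_rot h va.
exact: rs2.
Qed.

Lemma link_i v : v \notin c -> exists s, [/\ uniq s, s =i adj v & path.cycle adj s].
Proof.
move=> vc.
case: (pickP (adj v)) => [a va|none]; last first.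
  by exists [::]; split => // u; rewrite -[u \in adj v]/(adj v u) none.
exists (orbit (rot v) a); split; first exact: orbit_uniq.
  exact: orbit_nbrs.
apply: (sub_in_cycle (P := mem (orbit (rot v) a)) (e := frel (rot v))); last first.
    exact: (cycle_orbit perm_inj a).
  by apply/allP.
move=> b q bo _ /eqP <-; have vb : adj v b by move: bo; rewrite (orbit_nbrs va).
have := TL (e := (b, v)); rewrite /= adj_sym vb => /(_ isT); apply.
by rewrite in_o; apply: contra vc => /andP[bc /eqP ->]; rewrite mem_next.
Qed.

Lemma link_b v : v \in c -> exists s, [/\ uniq s, s =i adj v, s != [::] &
   [/\ head v s = next c v, last v s = prev c v & path adj (head v s) (behead s)]].
Proof.
move=> vc.
set x := next c v; set p := prev c v.
have vx : adj v x by apply: cyc_edge.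
have pc : p \in c by rewrite mem_prev.
have rp : rot v p = x.
  have : (p, v) \in o by rewrite in_o pc /p next_prev ?uc // eqxx.
  by move=> /(mem_orbit (f := F)) /F_next /= <-.
exists (orbit (rot v) x); split.
- exact: orbit_uniq.
- exact: orbit_nbrs.
- by apply/eqP => h; have := in_orbit (rot v) x; rewrite h.
have cyc := cycle_orbit (perm_inj (s := rot v)) x.
have uo := orbit_uniq (rot v) x.
have xo := in_orbit (rot v) x.
case E: (orbit (rot v) x) cyc uo xo => [|a t] // cyc uo.
have ax : a = x by move: E; rewrite /orbit -orderSpred /= => [[]].
rewrite {}ax {a} in cyc uo E * => _.
have lt : last x t = p.
  move: cyc; rewrite /= rcons_path => /andP[_ /eqP]; rewrite -rp.
  exact: perm_inj.
split => //=.
have fp : path (frel (rot v)) x t by move: cyc; rewrite /= rcons_path => /andP[].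
apply/(pathP x) => i it.
move/(pathP x): fp => /(_ i it) /eqP <-.
set b := nth x (x :: t) i.
have bo : b \in orbit (rot v) x by rewrite E /b mem_nth //= ltnS ltnW.
have vb : adj v b by move: bo; rewrite (orbit_nbrs vx).
have bp : b != p.
  have -> : p = nth x (x :: t) (size t).
    by rewrite -lt -[RHS]/(nth x (x :: t) (size (x :: t)).-1) nth_last.
  rewrite /b nth_uniq //= ?ltnS ?(ltnW it) //.
  by apply: contraTneq it => ->; rewrite ltnn.
have := TL (e := (b, v)); rewrite /= adj_sym vb => /(_ isT); apply.
rewrite in_o; apply: contra bp => /andP[bc /eqP ev].
by rewrite /p ev (prev_next uc).
Qed.

End Rot.

Theorem lemma3p2 (T : finType) (adj : rel T) (rot : T -> {perm T})
    (d0 : T * T) (x y : T) :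
  near_triangulation adj rot d0 ->
  #|T| <= 6 ->
  x \in outer_verts rot d0 -> y \in outer_verts rot d0 -> x != y ->
  ham_path adj x y
  \/ chord adj rot d0 x y
  \/ (exists z : T,
        [/\ adj x z /\ adj z y, chord adj rot d0 x z, chord adj rot d0 z y,
            #|T| = 6 &
            forall a b : T, a \notin [:: x; y; z] -> b \notin [:: x; y; z] ->
              ~~ adj a b])
  \/ (exists u : 'I_6 -> T,
        [/\ injective u,
            forall i j, adj (u i) (u j) = hex_tri_adj i j,
            forall i j, outer_edge rot d0 (u i) (u j) = hex_cyc i j &
            (x, y) = (u ord0, u (inord 3)) \/ (x, y) = (u (inord 3), u ord0)]).
Proof.
move=> NT T6 xo yo xy.
rewrite (outer_vertsE rot d0) in xo; rewrite (outer_vertsE rot d0) in yo.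
exact (concl_T (adj_sym NT) (adj_irr NT) (conn NT) (uc NT) (c2 NT) T6 (cyc_edge NT)
  (link_b NT) (link_i NT) xo yo xy (outer_edgeE NT) (outer_vertsE rot d0)).
Qed.
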